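(* Let $T,P,S$ be real constants and consider, on $\{(x_3,y_4): 0<x_3<1,\ 0<y_4<1\}$, the system $$\dot x_3=x_3\bigl((T-2P+S)-(T-S)y_4\bigr)\,\frac{y_4(1-x_3)}{(1+y_4-x_3+y_4x_3)^2},\qquad \dot y_4=(1-y_4)\bigl((T-P)x_3-(P-S)\bigr)\,\frac{y_4(1-x_3)}{(1+y_4-x_3+y_4x_3)^2}.$$ Then the function $$H(x_3,y_4)=-(P-S)\bigl(\log x_3+2\log(1-y_4)\bigr)+(T-P)x_3-(T-S)y_4$$ is constant along every solution of this system.
   Context: This system describes the reduced learning dynamics in the exploitative regime of the prisoner's dilemma with payoffs $T>R>P>S$, where $x_3$ is the exploiting player's probability of cooperating after outcome DC and $y_4$ the exploited player's probability of cooperating after outcome DD. *)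

(* Defs.v *)
From Stdlib Require Import Reals.
Open Scope R_scope.

Definition common_factor (x3 y4 : R) : R :=
  y4 * (1 - x3) / (1 + y4 - x3 + y4 * x3) ^ 2.

Definition F_x3 (T P S x3 y4 : R) : R :=
  x3 * ((T - 2 * P + S) - (T - S) * y4) * common_factor x3 y4.

Definition F_y4 (T P S x3 y4 : R) : R :=
  (1 - y4) * ((T - P) * x3 - (P - S)) * common_factor x3 y4.

Definition H (T P S x3 y4 : R) : R :=
  - (P - S) * (ln x3 + 2 * ln (1 - y4)) + (T - P) * x3 - (T - S) * y4.

Definition is_interval (I : R -> Prop) : Prop :=
  forall s t u, I s -> I t -> s <= u <= t -> I u.

(* Main.v *)
Require Import Defs.
From Stdlib Require Import Reals Lra.
Open Scope R_scope.

Lemma dh (T P S : R) (x3 y4 : R -> R) c a b :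
  0 < x3 c -> y4 c < 1 ->
  derivable_pt_lim x3 c a -> derivable_pt_lim y4 c b ->
  derivable_pt_lim (fun t => H T P S (x3 t) (y4 t)) c
   (-(P-S)*(/x3 c * a + 2*(/(1-y4 c) * (0 - b))) + (T-P)*a - (T-S)*b).
Proof.
  intros hx hy da db.
  unfold H.
  apply (derivable_pt_lim_minus
    (fun t => - (P - S) * (ln (x3 t) + 2 * ln (1 - y4 t)) + (T - P) * x3 t)
    (fun t => (T - S) * y4 t)).
  2: { apply derivable_pt_lim_scal; exact db. }
  apply (derivable_pt_lim_plus
    (fun t => - (P - S) * (ln (x3 t) + 2 * ln (1 - y4 t)))
    (fun t => (T - P) * x3 t)).
  2: { apply derivable_pt_lim_scal; exact da. }
  apply (derivable_pt_lim_scal (fun t => ln (x3 t) + 2 * ln (1 - y4 t))).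
  apply (derivable_pt_lim_plus (fun t => ln (x3 t)) (fun t => 2 * ln (1 - y4 t))).
  -
    apply (derivable_pt_lim_comp x3 ln). exact da. apply derivable_pt_lim_ln; exact hx.
  - apply (derivable_pt_lim_scal (fun t => ln (1 - y4 t))).

    apply (derivable_pt_lim_comp (fun t => 1 - y4 t) ln).
    + apply (derivable_pt_lim_minus (fun _ => 1) y4). apply derivable_pt_lim_const. exact db.
    + apply derivable_pt_lim_ln; lra.
Qed.

Theorem mainTheorem2 (T P S : R) (I : R -> Prop) (x3 y4 : R -> R) :
  is_interval I ->
  (forall t, I t -> 0 < x3 t < 1 /\ 0 < y4 t < 1) ->
  (forall t, I t -> derivable_pt_lim x3 t (F_x3 T P S (x3 t) (y4 t))) ->
  (forall t, I t -> derivable_pt_lim y4 t (F_y4 T P S (x3 t) (y4 t))) ->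
  forall s t, I s -> I t -> H T P S (x3 s) (y4 s) = H T P S (x3 t) (y4 t).
Proof.
  intros hI hb dx dy.
  assert (key : forall s t, I s -> I t -> s < t ->
            H T P S (x3 s) (y4 s) = H T P S (x3 t) (y4 t)).
  { intros s t hs ht hst.
    set (f' := fun c => -(P-S)*(/x3 c * F_x3 T P S (x3 c) (y4 c)
                + 2*(/(1-y4 c) * (0 - F_y4 T P S (x3 c) (y4 c))))
                + (T-P)*F_x3 T P S (x3 c) (y4 c) - (T-S)*F_y4 T P S (x3 c) (y4 c)).
    destruct (MVT_cor2 (fun t => H T P S (x3 t) (y4 t)) f' s t hst) as [c [hc hc2]].
    { intros c hc. assert (Ic : I c) by (apply (hI s t c); auto).
      destruct (hb c Ic) as [h1 h2]. unfold f'.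
      apply dh; try lra; auto. }
    assert (Ic : I c) by (apply (hI s t c); auto; lra).
    destruct (hb c Ic) as [h1 h2].
    assert (Hz : f' c = 0).
    { unfold f', F_x3, F_y4, common_factor.
      assert (0 < 1 + y4 c - x3 c + y4 c * x3 c) by nra.
      field; lra. }
    rewrite Hz in hc. lra. }
  intros s t hs ht.
  destruct (Rtotal_order s t) as [h|[h|h]].
  - apply key; auto.
  - subst; reflexivity.
  - symmetry; apply key; auto.
Qed.
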